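(* Let $G$ be a connected diamond-free CIS graph and let $n\ge 3$. Suppose $G$ has an induced subgraph $H$ with $V(H)=\{h_{i,j}: 1\le i,j\le n\}$ where, for $(i,j)\ne(k,l)$, $h_{i,j}h_{k,l}\in E(H)$ iff $i=k$ or $j=l$ (so $H\cong L(K_{n,n})$). Let $R_i=\{h_{i,j}:1\le j\le n\}$ and $L_j=\{h_{i,j}:1\le i\le n\}$. Then either all $2n$ cliques $R_1,\dots,R_n,L_1,\dots,L_n$ are maximal cliques of $G$, or none of them is a maximal clique of $G$. Moreover, if all of them are maximal cliques of $G$, then $G=H$.
   Context: A clique is strong if it intersects every inclusion-maximal stable set; a graph is CIS if every inclusion-maximal clique is strong. The diamond is $K_4$ minus one edge; diamond-free means no induced diamond. Maximal clique means inclusion-maximal. *)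

(* Defs.v *)
From mathcomp Require Import all_boot.
Set Implicit Arguments. Unset Strict Implicit. Unset Printing Implicit Defensive.

(* A finite simple graph: vertex type T : finType, adjacency e : rel T,
   assumed symmetric and irreflexive (hypotheses in the theorem). *)

Definition is_clique (T : finType) (e : rel T) (A : {set T}) : Prop :=
  forall x y, x \in A -> y \in A -> x != y -> e x y.

Definition is_stable (T : finType) (e : rel T) (A : {set T}) : Prop :=
  forall x y, x \in A -> y \in A -> ~~ e x y.

Definition maximal_clique (T : finType) (e : rel T) (A : {set T}) : Prop :=
  is_clique e A /\ forall B : {set T}, is_clique e B -> A \subset B -> B = A.

Definition maximal_stable (T : finType) (e : rel T) (A : {set T}) : Prop :=
  is_stable e A /\ forall B : {set T}, is_stable e B -> A \subset B -> B = A.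

Definition strong_clique (T : finType) (e : rel T) (C : {set T}) : Prop :=
  forall S : {set T}, maximal_stable e S -> exists x, x \in C :&: S.

Definition CIS (T : finType) (e : rel T) : Prop :=
  forall C : {set T}, maximal_clique e C -> strong_clique e C.

Definition diamond_free (T : finType) (e : rel T) : Prop :=
  ~ exists a b c d : T,
      [&& uniq [:: a; b; c; d], ~~ e a b,
          e a c, e a d, e b c, e b d & e c d].

Definition connected_graph (T : finType) (e : rel T) : Prop :=
  forall x y : T, connect e x y.

Definition row_set (T : finType) (n : nat) (h : 'I_n * 'I_n -> T) (i : 'I_n)
  : {set T} := [set h (i, j) | j : 'I_n].

Definition col_set (T : finType) (n : nat) (h : 'I_n * 'I_n -> T) (j : 'I_n)
  : {set T} := [set h (i, j) | i : 'I_n].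

(* Main.v *)
Require Import Defs.
From mathcomp Require Import all_boot.
From mathcomp Require Import fingroup perm.
From Stdlib Require Import Classical.
Set Implicit Arguments. Unset Strict Implicit. Unset Printing Implicit Defensive.

Definition stableb (T : finType) (e : rel T) (A : {set T}) : bool :=
  [forall x in A, forall y in A, ~~ e x y].

Lemma stableP (T : finType) (e : rel T) A : reflect (is_stable e A) (stableb e A).
Proof.
apply: (iffP forall_inP) => [H x y xA yA | H x xA].
  by move/forall_inP: (H x xA) => /(_ y yA).
by apply/forall_inP => y yA; apply: H.
Qed.

Lemma not_strong (T : finType) (e : rel T) (C S : {set T}) :
  symmetric e -> CIS e -> maximal_clique e C -> is_stable e S ->
  (forall x, x \in C -> exists2 y, y \in S & e x y) -> False.
Proof.
move=> sym cis mC stS dom.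
have [S' /maxsetP [/stableP st' mx'] sub] := maxset_exists (introT (stableP e S) stS).
have [x] := cis C mC S' (conj st' (fun B sB => mx' B (introT (stableP e B) sB))).
rewrite inE => /andP [xC xS'].
have [y yS exy] := dom x xC.
by move: (st' x y xS' (subsetP sub y yS)); rewrite exy.
Qed.

Lemma diamond_ext (T : finType) (e : rel T) (C : {set T}) x a b z :
  diamond_free e -> symmetric e -> is_clique e C -> x \notin C ->
  a \in C -> b \in C -> a != b -> e x a -> e x b -> z \in C -> e x z.
Proof.
move=> df sym cC xC aC bC ab xa xb zC.
case: (eqVneq z a) => [-> //|za]. case: (eqVneq z b) => [-> //|zb].
apply/negPn/negP => xz; apply: df; exists x, z, a, b.
have xz' : x != z by apply: contraNneq xC => ->.
have xa' : x != a by apply: contraNneq xC => ->.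
have xb' : x != b by apply: contraNneq xC => ->.
rewrite /= !inE !negb_or xz' xa' xb' za zb ab xz xa xb /=.
by rewrite (cC z a) // (cC z b) // (cC a b).
Qed.
Lemma avoid2 n (a b : 'I_n) : 3 <= n -> exists c : 'I_n, (c != a) && (c != b).
Proof.
move=> n3.
case: (pickP (fun c : 'I_n => (c != a) && (c != b))) => [c Hc|H]; first by exists c.
have : [set: 'I_n] \subset [set a; b].
  apply/subsetP => c _; rewrite !inE; move: (H c) => /negbT.
  by rewrite negb_and !negbK.
move/subset_leq_card; rewrite cardsT card_ord => le.
have := leq_trans le (leq_card_setU [set a] [set b]); rewrite !cards1.
by move=> h; move: (leq_trans n3 h).
Qed.

Lemma matching n (F : 'I_n -> 'I_n -> bool) (p q : 'I_n) : 3 <= n ->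
  (forall k c c', F k c -> F k c' -> c = c') ->
  (forall k k' c, F k c -> F k' c -> k = k') ->
  exists t : {perm 'I_n}, t p = q /\ forall k, k != p -> ~~ F k (t k).
Proof.
move=> n3 Fr Fc.
pose bad (t : {perm 'I_n}) := [set k | (k != p) && F k (t k)].
suff: forall m (t : {perm 'I_n}), t p = q -> #|bad t| <= m ->
  exists t : {perm 'I_n}, t p = q /\ forall k, k != p -> ~~ F k (t k).
  by move/(_ n (tperm p q)); rewrite tpermL; apply => //; apply: leq_trans (max_card _) _; rewrite card_ord.
elim=> [|m IH] t tp.
  rewrite leqn0 cards_eq0 => /eqP b0; exists t; split => // k kp.
  apply/negP => Fk; have : k \in bad t by rewrite inE kp Fk.
  by rewrite b0 inE.
case: (set_0Vmem (bad t)) => [b0 _|[k kb] cb].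
  exists t; split => // x xp; apply/negP => Fx.
  have : x \in bad t by rewrite inE xp Fx.
  by rewrite b0 inE.
have /andP [kp Fk] : (k != p) && F k (t k) by move: kb; rewrite inE.
have [k' /andP [k'p k'k]] := avoid2 p k n3.
pose t' := (tperm k k' * t)%g.
apply: (IH t').
  by rewrite /t' permM tpermD // eq_sym.
have sub : bad t' \subset bad t :\ k.
  apply/subsetP => x; rewrite !inE /t' permM => /andP [xp Fx].
  case: (eqVneq x k) => [xk|xk].
    subst x; move: Fx; rewrite tpermL => Fx.
    have := Fr _ _ _ Fk Fx => /perm_inj ek.
    by move: k'k; rewrite ek eqxx.
  case: (eqVneq x k') => [xk'|xk'].
    subst x; move: Fx; rewrite tpermR => Fx.
    have ek := Fc _ _ _ Fk Fx.
    by move: k'k; rewrite ek eqxx.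
  by rewrite tpermD 1?eq_sym // in Fx; rewrite xp Fx.
move: cb; rewrite (cardsD1 k (bad t)) kb add1n ltnS => cb.
exact: leq_trans (subset_leq_card sub) cb.
Qed.

Section Main.
Variables (T : finType) (e : rel T) (n : nat) (h : 'I_n * 'I_n -> T).
Hypotheses (sym : symmetric e) (irr : irreflexive e) (df : diamond_free e)
  (cis : CIS e) (cg : connected_graph e) (n3 : 3 <= n) (hinj : injective h)
  (hadj : forall p q : 'I_n * 'I_n, p != q ->
      e (h p) (h q) = (p.1 == q.1) || (p.2 == q.2)).

Definition Im := [set h p | p : 'I_n * 'I_n].

Lemma nadj k c k' c' : k != k' -> c != c' -> ~~ e (h (k, c)) (h (k', c')).
Proof.
move=> kk cc; rewrite hadj /=; first by rewrite (negbTE kk) (negbTE cc).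
by rewrite xpair_eqE (negbTE kk).
Qed.

Lemma adjr k c c' : c != c' -> e (h (k, c)) (h (k, c')).
Proof.
by move=> cc; rewrite hadj /= ?eqxx // xpair_eqE negb_and cc orbT.
Qed.

Lemma adjc k k' c : k != k' -> e (h (k, c)) (h (k', c)).
Proof.
by move=> kk; rewrite hadj /= ?eqxx ?orbT // xpair_eqE negb_and kk.
Qed.

Lemma row_clique i : is_clique e (row_set h i).
Proof.
move=> x y /imsetP [c _ ->] /imsetP [c' _ ->] xy; apply: adjr.
by apply: contraNneq xy => ->.
Qed.

Lemma col_clique j : is_clique e (col_set h j).
Proof.
move=> x y /imsetP [c _ ->] /imsetP [c' _ ->] xy; apply: adjc.
by apply: contraNneq xy => ->.
Qed.

Lemma in_row k c i : (h (k, c) \in row_set h i) = (k == i).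
Proof.
apply/imsetP/eqP => [[c' _ /hinj [-> _]] //|->]; by exists c.
Qed.

Lemma in_col k c j : (h (k, c) \in col_set h j) = (c == j).
Proof.
apply/imsetP/eqP => [[c' _ /hinj [_ ->]] //|->]; by exists k.
Qed.

Lemma perm_stable x0 (t : {perm 'I_n}) r : x0 \notin Im ->
  (forall k, k != r -> ~~ e x0 (h (k, t k))) ->
  is_stable e (x0 |: [set h (k, t k) | k in [set k | k != r]]).
Proof.
move=> x0I nx x y; rewrite !in_setU1.
have H1 : forall z, z \in [set h (k, t k) | k in [set k | k != r]] -> ~~ e x0 z.
  by move=> z /imsetP [k]; rewrite inE => kr ->; apply: nx.
case/orP => [/eqP ->|xS]; case/orP => [/eqP ->|yS].
- by rewrite irr.
- exact: H1.
- by rewrite sym; apply: H1.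
case/imsetP: xS => k _ ->; case/imsetP: yS => k' _ ->.
case: (eqVneq k k') => [-> |kk]; first by rewrite irr.
by apply: nadj => //; rewrite (inj_eq perm_inj).
Qed.

Lemma max_no2 C x a b : maximal_clique e C -> x \notin C -> a \in C -> b \in C ->
  a != b -> e x a -> e x b -> False.
Proof.
move=> [cC mC] xC aC bC ab xa xb.
have ext z : z \in C -> e x z by apply: diamond_ext df sym cC xC aC bC ab xa xb.
have cB : is_clique e (x |: C).
  move=> y z; rewrite !in_setU1 => /orP [/eqP ->|yC] /orP [/eqP ->|zC].
  - by rewrite eqxx.
  - by move=> _; apply: ext.
  - by move=> _; rewrite sym; apply: ext.
  - by apply: cC.
have := mC _ cB (subsetUr _ _) => eB.
by move: xC; rewrite -eB in_setU1 eqxx.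
Qed.

Lemma not_max_ext C : is_clique e C -> ~ maximal_clique e C ->
  exists2 v, v \notin C & is_clique e (v |: C).
Proof.
move=> cC nm.
case: (classic (exists B, is_clique e B /\ C \subset B /\ B <> C)) => [[B [cB [sB nB]]]|nE].
  have : ~~ (B \subset C).
    by apply/negP => sBC; apply: nB; apply/eqP; rewrite eqEsubset sBC.
  case/subsetPn => v vB vC; exists v => //.
  move=> x y; rewrite !in_setU1 => /orP [/eqP ->|xC] /orP [/eqP ->|yC];
   apply: cB => //; exact: subsetP sB _ _.
exfalso; apply: nm; split => // B cB sB.
by apply: NNPP => nB; apply: nE; exists B.
Qed.

Lemma o0 : 'I_n.
Proof. exact: Ordinal (leq_trans (isT : 0 < 3) n3). Qed.

Lemma part1 i : ~ maximal_clique e (row_set h i) ->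
  forall j, ~ maximal_clique e (col_set h j).
Proof.
move=> nm j mj.
have [v vR cB] := not_max_ext (@row_clique i) nm.
have vadj c : e v (h (i, c)).
  apply: cB; rewrite ?in_setU1 ?eqxx //= ?in_row ?eqxx ?orbT //.
  by apply: contraNneq vR => ->; rewrite in_row.
have vI : v \notin Im.
  apply/negP => /imsetP [[a b] _ vab].
  have ai : a != i by apply: contraNneq vR => ai; rewrite vab in_row ai.
  have [b' /andP [b'b _]] := avoid2 b b n3.
  rewrite eq_sym in b'b.
  by move: (vadj b'); rewrite vab (negbTE (nadj ai b'b)).
have vno k c : k != i -> ~~ e v (h (k, c)).
  move=> ki; apply/negP => vk.
  have [d /andP [dc _]] := avoid2 c c n3.
  rewrite eq_sym in dc.
  have xI : h (k, c) \in Im by apply: imset_f.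
  apply: (negP (nadj ki dc)).
  apply: (diamond_ext df sym cB (a := v) (b := h (i, c))).
  - rewrite in_setU1 in_row (negbTE ki) orbF.
    by apply: contraNneq vI => <-.
  - by rewrite in_setU1 eqxx.
  - by rewrite in_setU1 in_row eqxx orbT.
  - by apply: contraNneq vI => ->; apply: imset_f.
  - by rewrite sym.
  - by apply: adjc.
  - by rewrite in_setU1 in_row eqxx orbT.
pose s := tperm i j.
apply: (not_strong sym cis mj (perm_stable vI (t := s) (r := i) (fun k ki => vno k _ ki))).
move=> x /imsetP [a _ ->].
case: (eqVneq a i) => [->|ai].
  by exists v; rewrite ?in_setU1 ?eqxx // sym.
exists (h (a, s a)).
  by rewrite in_setU1; apply/orP; right; apply: imset_f; rewrite inE.
apply: adjr; apply/negP => /eqP ja.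
by move: ai; rewrite -(perm_inj (s := s) (x1 := a) (x2 := i)) ?eqxx // tpermL.
Qed.
Lemma part2 : (forall i, maximal_clique e (row_set h i)) ->
  (forall j, maximal_clique e (col_set h j)) -> forall v, v \in Im.
Proof.
move=> mR mL v; apply/negPn/negP => vI.
have [w [p [q [wI wpq]]]] : exists w p q, w \notin Im /\ e w (h (p, q)).
  apply: NNPP => nE.
  have cl : closed e Im.
    move=> x y xy; apply/idP/idP => [xI|yI]; apply/negPn/negP => nI; apply: nE.
    - by case/imsetP: xI => [[a b] _ xab]; exists y, a, b; rewrite -xab sym.
    - by case/imsetP: yI => [[a b] _ yab]; exists x, a, b; rewrite -yab.
  have := closed_connect cl (cg v (h (o0, o0))).
  by rewrite (negbTE vI) imset_f.
have wR k : w \notin row_set h k.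
  by apply: contraNN wI => /imsetP [c _ ->]; apply: imset_f.
have wL c : w \notin col_set h c.
  by apply: contraNN wI => /imsetP [k _ ->]; apply: imset_f.
pose F k c := e w (h (k, c)).
have Fr k c c' : F k c -> F k c' -> c = c'.
  move=> Fc Fc'; apply/eqP/negPn/negP => cc; apply: (max_no2 (mR k) (wR k) _ _ _ Fc Fc').
  - by rewrite in_row.
  - by rewrite in_row.
  - by rewrite (inj_eq hinj) xpair_eqE negb_and cc orbT.
have Fc k k' c : F k c -> F k' c -> k = k'.
  move=> Fc Fc'; apply/eqP/negPn/negP => kk; apply: (max_no2 (mL c) (wL c) _ _ _ Fc Fc').
  - by rewrite in_col.
  - by rewrite in_col.
  - by rewrite (inj_eq hinj) xpair_eqE negb_and kk.
have [t [tp tno]] := @matching n F p q n3 Fr Fc.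
apply: (not_strong sym cis (mR p) (perm_stable wI (t := t) (r := p) tno)).
move=> x /imsetP [c _ ->].
case: (eqVneq c q) => [->|cq].
  by exists w; rewrite ?in_setU1 ?eqxx // sym.
have kp : (t^-1)%g c != p.
  by apply: contraNneq cq => e1; rewrite -tp -e1 permKV.
exists (h ((t^-1)%g c, t ((t^-1)%g c))).
  by rewrite in_setU1; apply/orP; right; apply: imset_f; rewrite inE.
by rewrite permKV; apply: adjc; rewrite eq_sym.
Qed.
End Main.

Theorem lemma6 (T : finType) (e : rel T) (n : nat) (h : 'I_n * 'I_n -> T) :
  symmetric e -> irreflexive e ->
  connected_graph e -> diamond_free e -> CIS e ->
  3 <= n ->
  injective h ->
  (forall p q : 'I_n * 'I_n, p != q ->
      e (h p) (h q) = (p.1 == q.1) || (p.2 == q.2)) ->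
  ((forall i, maximal_clique e (row_set h i)) /\
   (forall j, maximal_clique e (col_set h j))
   \/
   (forall i, ~ maximal_clique e (row_set h i)) /\
   (forall j, ~ maximal_clique e (col_set h j))) /\
  ((forall i, maximal_clique e (row_set h i)) ->
   (forall j, maximal_clique e (col_set h j)) ->
   forall v : T, v \in [set h p | p : 'I_n * 'I_n]).
Proof.
move=> sym irr cg df cis n3 hinj hadj.
split; last exact: part2 sym irr df cis cg n3 hinj hadj.
pose h' := fun pq : 'I_n * 'I_n => h (pq.2, pq.1).
have hinj' : injective h'.
  by move=> [a b] [c d] /hinj [-> ->].
have hadj' : forall p q : 'I_n * 'I_n, p != q ->
      e (h' p) (h' q) = (p.1 == q.1) || (p.2 == q.2).
  move=> [a b] [c d] pq; rewrite /h' /= hadj /= 1?orbC //.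
  by apply: contra pq; rewrite !xpair_eqE andbC.
have P1 := part1 sym irr df cis n3 hinj hadj.
have P2 : forall j, ~ maximal_clique e (col_set h j) ->
    forall i, ~ maximal_clique e (row_set h i).
  exact: (part1 (h := h') sym irr df cis n3 hinj' hadj').
have o : 'I_n := o0 n3.
case: (classic (forall i, maximal_clique e (row_set h i))) => [AR|nAR].
  case: (classic (forall j, maximal_clique e (col_set h j))) => [AL|nAL].
    by left.
  have [j nj] := not_all_ex_not _ _ nAL.
  by exfalso; apply: (P2 j nj o).
have [i ni] := not_all_ex_not _ _ nAR.
right; split; last exact: P1 i ni.
exact: P2 o (P1 i ni o).
Qed.
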